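(* Let $p(x)\in\mathbb{F}_3[x]$ be a monic irreducible polynomial of degree $3$ with non-zero trace, let $k\ge 1$, $n=3k$, and let $A\in\mathbb{M}_n(\mathbb{F}_3)$ be similar to the block-diagonal direct sum of $k$ copies of the companion matrix of $p(x)$. Then there is no $M\in\mathbb{M}_n(\mathbb{F}_3)$ with $M^2=0$ such that $A+M$ is diagonalizable over $\mathbb{F}_3$.
   Context: A matrix $X\in\mathbb{M}_n(\mathbb{F}_3)$ is diagonalizable if there is an invertible $U\in\mathbb{M}_n(\mathbb{F}_3)$ with $U^{-1}XU$ diagonal (equivalently, $X^3=X$). The trace of a monic polynomial $x^3+a_2x^2+a_1x+a_0$ is $-a_2$, i.e. the trace of its companion matrix. *)

(* Defs.v *)
From mathcomp Require Import all_boot all_order all_algebra.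

(* Main.v *)
Require Import Defs.
From mathcomp Require Import all_boot all_order all_algebra.
From mathcomp Require Import zify ring.
Import GRing.Theory.
Local Open Scope ring_scope.

Lemma R1_of (F : fieldType) n (A M : 'M[F]_n) (HM : M *m M = 0) (HD : (A + M) *m (A + M) *m (A + M) = A + M) :
  A *m A *m A + A *m A *m M + A *m M *m A + M *m A *m A + M *m A *m M = A + M.
Proof.
rewrite -[RHS]HD !(mulmxDl, mulmxDr) HM !(mul0mx, mulmx0, addr0) -[A *m M *m M]mulmxA HM mulmx0 addr0.
by rewrite [LHS](ACl (1*3*4*(2*5)))%AC.
Qed.

Lemma helper5 (V : zmodType) (x a b c d : V) : x + a + b + c + d - (a + b + c + d) = x.
Proof. by rewrite [x + a + b + c + d](ACl (1*(2*3*4*5)))%AC addrK. Qed.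

Lemma t2F3 (t : 'F_3) : t != 0 -> t * t = 1.
Proof. by move=> h; apply/eqP; move: h; case: t => [[|[|[|//]]] ?]. Qed.

Lemma core (F : fieldType) n (A M : 'M[F]_n) (a0 a1 t : F) :
  (0 < n)%N -> t * t = 1 ->
  (forall x : F, x^+3 - t * x^+2 + a1 * x + a0 != 0) ->
  (forall c : F, [\/ c = 0, c = 1 | c = -1] ->
     c * c + t * (a0 - c * ((1 + a1) - t * c)) + ((1 + a1) - t * c) != 1) ->
  A *m A *m A = t *: (A *m A) - a1 *: A - a0%:M ->
  M *m M = 0 -> (A + M) *m (A + M) *m (A + M) = A + M -> False.
Proof.
move=> n0 tt1 hroot hfin HpA HM HD.
have R1 := @R1_of _ _ A M HM HD.
set r := \rank M.
have [U [HMU HUM0 HUfree]] : exists U : 'M[F]_(r, n),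
    [/\ (M <= U)%MS, (U <= M)%MS & row_free U].
  by exists (row_base M); rewrite !eq_row_base row_base_free submx_refl.
have HUM : U *m M = 0.
  by rewrite -(mulmxKpV HUM0) -[LHS]mulmxA HM mulmx0.
have UMX : forall p (X : 'M_(n, p)), U *m (M *m X) = 0.
  by move=> p X; rewrite mulmxA HUM mul0mx.
have E0 : U *m A *m A *m A + U *m A *m A *m M + U *m A *m M *m A = U *m A.
  have := congr1 (mulmx U) R1.
  by rewrite !mulmxDr HUM addr0 -!mulmxA !UMX !addr0 !mulmxA.
set Phi := U *m A *m M *m pinvmx U.
set Psi := U *m A *m A *m M *m pinvmx U.
have HPhi : U *m A *m M = Phi *m U.
  rewrite /Phi mulmxKpV //; apply: submx_trans HMU; exact: submxMl.
have HPsi : U *m A *m A *m M = Psi *m U.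
  rewrite /Psi mulmxKpV //; apply: submx_trans HMU; exact: submxMl.
have E0' : U *m A *m A *m A = U *m A - Psi *m U - Phi *m (U *m A).
  by rewrite -[X in X - Psi *m U]E0 HPsi HPhi mulmxA addrAC !addrK.
set C := t *: ((1 + a1)%:M - Phi).
set B := t *: (a0%:M - Psi).
have E1 : U *m A *m A = C *m (U *m A) + B *m U.
  have H : t *: (U *m A *m A) = U *m A - Psi *m U - Phi *m (U *m A)
                                + a1 *: (U *m A) + a0 *: U.
    rewrite -E0'.
    have -> : U *m A *m A *m A = U *m (A *m A *m A) by rewrite !mulmxA.
    rewrite HpA !mulmxBr -!scalemxAr mul_mx_scalar mulmxA.
    by rewrite addrAC !subrK.
  rewrite -[LHS]scale1r -tt1 -scalerA H /C /B -(scalemxAl t _ (U *m A)) -(scalemxAl t _ U). rewrite !mulmxBl !mul_scalar_mx -scalerDr scalerDl scale1r.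
  by congr (_ *: _); rewrite [LHS](ACl ((1*4*3)*(5*2)))%AC.

have E2 : Psi = C *m Phi.
  apply: (row_free_inj HUfree).
  rewrite -HPsi E1 mulmxDl -[B *m U *m M]mulmxA HUM mulmx0 addr0.
  by rewrite -[C *m (U *m A) *m M]mulmxA HPhi mulmxA.
have h1 : U *m A *m A *m A = (C *m C + B) *m (U *m A) + (C *m B) *m U.
  rewrite E1 mulmxDl -[C *m (U *m A) *m A]mulmxA E1 -[B *m U *m A]mulmxA.
  rewrite mulmxDr !mulmxDl !mulmxA.
  by rewrite [LHS](ACl (1*3*2))%AC.
have E3 : (C *m C + B + Phi - 1%:M) *m (U *m A) + (C *m B + Psi) *m U = 0.
  transitivity ((C *m C + B) *m (U *m A) + (C *m B) *m U
                 - (U *m A - Psi *m U - Phi *m (U *m A))); last by rewrite -h1 E0' subrr.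
  rewrite !mulmxDl mulNmx mul1mx !opprB.
  by rewrite [LHS](AC (4*2) ((1*2*5)*(3*(6*4))))%AC.
have Hr2 : (r + r <= n)%N.
  have HMk : (M <= kermx M)%MS by apply/sub_kermxP.
  have := mxrankS HMk; rewrite mxrank_ker -/r => Hk.
  have := rank_leq_col M; rewrite -/r => Hc.
  lia.
pose S := col_mx U (U *m A).
have HUS : (U <= S)%MS by rewrite -addsmxE addsmxSl.
have HUAS : (U *m A <= S)%MS by rewrite -addsmxE addsmxSr.
have HMS : (M <= S)%MS := submx_trans HMU HUS.
have HUAAS : (U *m A *m A <= S)%MS.
  by rewrite E1 addmx_sub // mulmx_sub.
have HA3 : A *m A *m A - A =
    M - (A *m A *m M + A *m M *m A + M *m A *m A + M *m A *m M).
  apply/eqP; rewrite subr_eq; apply/eqP.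
  by rewrite addrAC [M + A]addrC -R1 helper5.
have Hcube : (A *m A *m A - A <= S)%MS.
  rewrite HA3 addmx_sub // (eqmx_opp _) !addmx_sub //.
  - exact: mulmx_sub HMS.
  - by apply: submx_trans HUAS; apply: submxMr; exact: mulmx_sub HMU.
  - by apply: submx_trans HUAAS; apply: submxMr; exact: submxMr.
  - exact: mulmx_sub HMS.
have Hunit : (A *m A *m A - A) \in unitmx.
  have Hc : forall c : F, (A - c%:M) \in unitmx.
    move=> c; rewrite unitmxE unitfE; apply/negP => /det0P [v vn0 vA].
    have vAc : v *m A = c *: v.
      by apply/eqP; rewrite -subr_eq0 -mul_mx_scalar -mulmxBr vA.
    have : v *m (A *m A *m A) = v *m (t *: (A *m A) - a1 *: A - a0%:M) by rewrite HpA.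
    rewrite !mulmxA !vAc -!scalemxAl !vAc !mulmxBr -!scalemxAr !mulmxA !vAc.
    rewrite -!scalemxAl !vAc mul_mx_scalar !scalerA.
    rewrite -!scalerBl => H.
    have /eqP : (c * c * c - (t * c * c - a1 * c - a0)) *: v = 0 by rewrite scalerBl H subrr.
    rewrite scalemx_eq0 (negbTE vn0) orbF.
    have -> : c * c * c - (t * c * c - a1 * c - a0) = c^+3 - t * c^+2 + a1 * c + a0 by ring.
    by rewrite (negbTE (hroot c)).
  have HA0 : A \in unitmx by have := Hc 0; rewrite raddf0 subr0.
  have HA1 : (A - 1%:M) \in unitmx := Hc 1.
  have HA2 : (A + 1%:M) \in unitmx by have := Hc (-1); rewrite raddfN opprK.
  have -> : A *m A *m A - A = A *m ((A - 1%:M) *m (A + 1%:M)).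
    rewrite (mulmxBl A (1%:M)) (mulmxDr A A) (mulmx1 A) (mul1mx (A + 1%:M)) addrKA.
    by rewrite mulmxBr (mulmx1 A) mulmxA.
  by rewrite !unitmx_mul HA0 HA1 HA2.
have Hfull : row_full S.
  by rewrite -sub1mx -(mulVmx Hunit); apply: submx_trans (submxMl _ _) Hcube.
have HrS : n = (r + r)%N.
  have := rank_leq_row S; move: Hfull; rewrite /row_full => /eqP ->.
  lia.
have Hfree : row_free S.
  by rewrite /row_free; move: Hfull; rewrite /row_full => /eqP ->; rewrite -HrS.
have [X2 X1] : C *m B + Psi = 0 /\ C *m C + B + Phi - 1%:M = 0.
  have : row_mx (C *m B + Psi) (C *m C + B + Phi - 1%:M) *m S = 0 *m S.
    by rewrite mul0mx mul_row_col addrC.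
  move/(row_free_inj Hfree)/eqP; rewrite row_mx_eq0 => /andP [/eqP -> /eqP ->].
  by [].
have r0 : (0 < r)%N by lia.
have HPhiC : Phi = (1 + a1)%:M - t *: C.
  by rewrite /C scalerA tt1 scale1r opprB addrC subrK.
have HBP : B + Phi = 1%:M - C *m C.
  apply/eqP; rewrite eq_sym subr_eq addrC addrA; apply/eqP; symmetry.
  by apply/eqP; rewrite -subr_eq0 X1.
have Hcub : C *m (1%:M - C *m C) = 0.
  by rewrite -HBP mulmxDr -E2 X2.
have Hdet0 : \det (0 : 'M[F]_r) = 0.
  rewrite -(scale0r (1%:M : 'M[F]_r)) detZ det1 mulr1 expr0n.
  by move: r0; case: (r).
have Hfac : 1%:M - C *m C = (1%:M - C) *m (1%:M + C).
  by rewrite mulmxBl mul1mx mulmxDr (mulmx1 C) addrKA.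
have [c [v [vn0 vC hc]]] : exists c (v : 'rV[F]_r), [/\ v != 0, v *m C = c *: v &
    [\/ c = 0, c = 1 | c = -1]].
  have := Hdet0; rewrite -Hcub Hfac !det_mulmx => /eqP.
  rewrite !mulf_eq0 => /orP [/det0P [v vn0 vC0]|/orP [] /det0P [v vn0 vC0]].
  - by exists 0, v; rewrite scale0r; split => //; constructor.
  - exists 1, v; rewrite scale1r; split => //; last by constructor.
    by apply/eqP; rewrite eq_sym -subr_eq0 -{1}(mulmx1 v) -mulmxBr vC0.
  - exists (-1), v; rewrite scaleN1r; split => //; last by constructor.
    by apply/eqP; rewrite -addr_eq0 -{2}(mulmx1 v) -mulmxDr addrC vC0.
have vPhi : v *m Phi = ((1 + a1) - t * c) *: v.
  by rewrite HPhiC mulmxBr mul_mx_scalar -scalemxAr vC scalerA scalerBl.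
have vPsi : v *m Psi = (c * ((1 + a1) - t * c)) *: v.
  by rewrite E2 mulmxA vC -scalemxAl vPhi scalerA.
have vB : v *m B = (t * (a0 - c * ((1 + a1) - t * c))) *: v.
  by rewrite /B -scalemxAr mulmxBr mul_mx_scalar vPsi -scalerBl scalerA.
have vCC : v *m (C *m C) = (c * c) *: v.
  by rewrite mulmxA vC -scalemxAl vC scalerA.
have := congr1 (mulmx v) X1.
rewrite mulmx0 !mulmxDr mulmxN (mulmx1 v) vCC vB vPhi => /eqP.
rewrite -[X in _ - X == _]scale1r -!scalerDl -scalerBl scalemx_eq0 (negbTE vn0) orbF subr_eq0.
by rewrite (negbTE (hfin c hc)).
Qed.


Lemma ch_cubic (F : fieldType) m (B : 'M[F]_m) (q : {poly F}) :
  char_poly B = q -> size q = 4%N ->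
  B *m B *m B + q`_2 *: (B *m B) + q`_1 *: B + (q`_0)%:M = 0.
Proof.
case: m B => [|m] B Hq Hs; first exact: flatmx0.
have CH := Cayley_Hamilton B; rewrite Hq in CH.
have q3 : q`_3 = 1.
  have := char_poly_monic B; rewrite Hq monicE lead_coefE Hs => /eqP.
  by [].
have Eq : q = 'X^3 + q`_2 *: 'X^2 + q`_1 *: 'X + (q`_0)%:P.
  apply/polyP => i; rewrite !coefD !coefZ !coefXn coefX coefC.
  case: i => [|[|[|[|i]]]] /=; rewrite ?mulr0 ?mulr1 ?addr0 ?add0r //.
  by rewrite nth_default // Hs.
rewrite {1}Eq !rmorphD /= !linearZ /= rmorphXn /= !horner_mx_X horner_mx_C in CH.
by rewrite -CH rmorphXn /= horner_mx_X mulmxE -expr2 -mulrA -expr2 -exprS.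
Qed.

Lemma diag_cubic (F : fieldType) k m (B : 'M[F]_m) (c0 c1 c2 : F) :
  B *m B *m B + c2 *: (B *m B) + c1 *: B + c0%:M = 0 ->
  let Bd := \mxdiag_(i < k) B in
  Bd *m Bd *m Bd + c2 *: (Bd *m Bd) + c1 *: Bd + c0%:M = 0.
Proof.
move=> HB Bd.
have HBd : forall p (Y_ : 'I_k -> 'M[F]_(m, p)), Bd *m \mxcol_i Y_ i = \mxcol_i (B *m Y_ i).
  by move=> p Y_; rewrite mul_mxdiag_mxcol.
have HS : forall a p (Y_ : 'I_k -> 'M[F]_(m, p)), a *: \mxcol_i Y_ i = \mxcol_i (a *: Y_ i).
  move=> a p Y_; rewrite -mul_scalar_mx -(mxdiagZ a) mul_mxdiag_mxcol.
  by apply: eq_mxcol => i; rewrite mul_scalar_mx.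
rewrite -[LHS]mulmx1 -(submxcolK (1%:M : 'M[F]_(\sum_(i < k) m))).
rewrite !mulmxDl -!scalemxAl mul_scalar_mx -!mulmxA !HBd !HS -!mxcolD.
transitivity (\mxcol_(i < k) (0 : 'M[F]_(m, \sum_(i < k) m))); last exact: mxcol0.
apply: eq_mxcol => i.
transitivity ((B *m B *m B + c2 *: (B *m B) + c1 *: B + c0%:M) *m submxcol 1%:M i); last by rewrite HB mul0mx.
by rewrite !mulmxDl -!scalemxAl !mulmxA mul_scalar_mx.
Qed.

Lemma sim_cubic (F : fieldType) n (A Bd P : 'M[F]_n) (c0 c1 c2 : F) :
  P \in unitmx -> P *m A = Bd *m P ->
  Bd *m Bd *m Bd + c2 *: (Bd *m Bd) + c1 *: Bd + c0%:M = 0 ->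
  A *m A *m A + c2 *: (A *m A) + c1 *: A + c0%:M = 0.
Proof.
move=> Pu HPA HB.
have H2 : P *m (A *m A) = Bd *m Bd *m P by rewrite mulmxA HPA -!mulmxA HPA.
have H3 : P *m (A *m A *m A) = Bd *m Bd *m Bd *m P.
  by rewrite mulmxA H2 -!mulmxA HPA.
have : P *m (A *m A *m A + c2 *: (A *m A) + c1 *: A + c0%:M) = 0.
  transitivity ((Bd *m Bd *m Bd + c2 *: (Bd *m Bd) + c1 *: Bd + c0%:M) *m P); last first.
    by rewrite HB mul0mx.
  rewrite !mulmxDr !mulmxDl H3 -!scalemxAr -!scalemxAl H2 HPA mul_mx_scalar.
  by rewrite mul_scalar_mx.
move=> H; by rewrite -[LHS]mul1mx -(mulVmx Pu) -[LHS]mulmxA H mulmx0.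
Qed.

Lemma diag_cube_id (F : fieldType) n (D P : 'M[F]_n) :
  (forall x : F, x * x * x = x) -> P \in unitmx -> is_diag_mx (conjmx P D) ->
  D *m D *m D = D.
Proof.
move=> cub Pu; rewrite conjumx // => /diag_mxP [d Hd].
have HD : D = invmx P *m diag_mx d *m P.
  by rewrite -Hd !mulmxA mulVmx // mul1mx -mulmxA mulVmx // mulmx1.
have E3 : diag_mx d *m diag_mx d *m diag_mx d = diag_mx d.
  rewrite -mulmxA !mul_diag_mx; apply/matrixP => i j; rewrite !mxE.
  by case: (i == j); rewrite /= ?mulr1n ?mulr0n ?mulr0 // mulrA cub.
rewrite HD -!mulmxA [P *m (invmx P *m _)]mulmxA mulmxV // mul1mx.
rewrite [P *m (invmx P *m _)]mulmxA mulmxV // mul1mx.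
by congr (_ *m _); rewrite !mulmxA E3.
Qed.

Lemma lin_rearr (F : fieldType) n (X Y Z : 'M[F]_n) (c0 c1 c2 : F) :
  X + c2 *: Y + c1 *: Z + c0%:M = 0 -> X = (- c2) *: Y - c1 *: Z - c0%:M.
Proof.
move/eqP; rewrite -!addrA addr_eq0 => /eqP ->.
by rewrite !opprD scaleNr addrA.
Qed.

Lemma horner4 (F : fieldType) (q : {poly F}) x :
  size q = 4%N -> q`_3 = 1 ->
  q.[x] = x^+3 - (- q`_2) * x^+2 + q`_1 * x + q`_0.
Proof.
move=> Hs H3; rewrite horner_coef Hs !big_ord_recr big_ord0 /= H3.
by rewrite mulNr opprK; ring.
Qed.

Lemma cubeF3 (x : 'F_3) : x * x * x = x.
Proof. by apply/eqP; case: x => [[|[|[|//]]] ?]. Qed.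

Lemma finF3 (a0 a1 t c : 'F_3) : t != 0 ->
  (forall x : 'F_3, x^+3 - t * x^+2 + a1 * x + a0 != 0) ->
  [\/ c = 0, c = 1 | c = -1] ->
  c * c + t * (a0 - c * ((1 + a1) - t * c)) + ((1 + a1) - t * c) != 1.
Proof.
move=> ht hp _.
have h0 := hp 0; have h1 := hp 1; have h2 := hp (-1).
move: ht h0 h1 h2; clear hp.
by case: a0 => [[|[|[|//]]] ?]; case: a1 => [[|[|[|//]]] ?]; case: t => [[|[|[|//]]] ?]; case: c => [[|[|[|//]]] ?].
Qed.

Theorem proposition3p5 (p : {poly 'F_3}) (k : nat)
  (Hmonic : p \is monic) (Hirr : irreducible_poly p) (Hdeg : size p = 4%N)
  (Htr : - p`_2 != 0) (Hk : (1 <= k)%N)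
  (A : 'M['F_3]_(\sum_(i < k) (size p).-1))
  (HA : similar_in unitmx A (\mxdiag_(i < k) companionmx p)) :
  ~ exists M : 'M['F_3]_(\sum_(i < k) (size p).-1),
      M *m M = 0 /\ diagonalizable (A + M).
Proof.
move=> [M [HM [P Pu Pdiag]]].
have p3 : p`_3 = 1 by move: Hmonic; rewrite monicE lead_coefE Hdeg => /eqP.
have Hcomp := @ch_cubic _ _ _ _ (companionmxK Hmonic) Hdeg.
have Hbd := @diag_cubic _ k _ _ _ _ _ Hcomp; simpl in Hbd.
case: HA => Q Qu /(similarP Qu) HQ.
have HcA := @sim_cubic _ _ A _ Q _ _ _ Qu HQ Hbd.
have HpA := @lin_rearr _ _ _ _ _ _ _ _ HcA.
have HD := @diag_cube_id _ _ (A + M) P cubeF3 Pu Pdiag.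
have n0 : (0 < \sum_(i < k) (size p).-1)%N.
  case: (k) Hk => [//|k'] _; rewrite big_ord_recl Hdeg; exact: ltn_addr.
have Hnoroot : forall x : 'F_3, p.[x] != 0.
  move=> x; apply/negP => /eqP rx.
  have dv : ('X - x%:P) %| p by rewrite dvdp_XsubCl; apply/rootP.
  case: Hirr => _ /(_ ('X - x%:P)); rewrite size_XsubC => /(_ isT dv) /eqp_size.
  by rewrite size_XsubC Hdeg.
have hroot : forall x : 'F_3, x^+3 - (- p`_2) * x^+2 + p`_1 * x + p`_0 != 0.
  by move=> x; rewrite -horner4.
apply: (@core _ _ A M (p`_0) (p`_1) (- p`_2) n0 (@t2F3 _ Htr) hroot _ HpA HM HD).
by move=> c hc; apply: finF3.
Qed.
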